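(* Let $\lambda \geq 0$, $0 \leq \gamma \leq 1$, $0\leq\beta<1$, $\tau \in \mathbb{C}\setminus\{0\}$ and $\delta \in \mathbb{N}_0$. Let $f(z)=z+\sum_{k=2}^{\infty}a_kz^k$ belong to $\Theta_{\Sigma}(\tau,\lambda,\gamma,\delta;\beta)$. Then $$|a_2| \leq \min\left\{\frac{2|\tau|(1-\beta)}{(\delta+1)(1+\lambda+\gamma+5\lambda\gamma)},\ 2\sqrt{\frac{|\tau|(1-\beta)}{(\delta+1)(\delta+2)\big(1+2(\lambda+\gamma+5\lambda\gamma)\big)}}\right\}$$ and $$|a_3| \leq \frac{4|\tau|(1-\beta)}{(\delta+1)(\delta+2)\big(1+2(\lambda+\gamma+5\lambda\gamma)\big)}.$$
   Context: Let $\mathbb{U}=\{z\in\mathbb{C}:|z|<1\}$. $\Sigma$ denotes the class of bi-univalent functions: functions $f(z)=z+\sum_{k=2}^\infty a_kz^k$ analytic and univalent in $\mathbb{U}$ whose inverse $f^{-1}$ extends to a univalent function $g$ on $\mathbb{U}$; this $g$ has the expansion $g(w)=w-a_2w^2+(2a_2^2-a_3)w^3-\cdots$. For $\delta\in\mathbb{N}_0$ and $h(z)=z+\sum_{k\ge2}c_kz^k$ analytic in $\mathbb{U}$, the Ruscheweyh derivative is $\mathcal{R}^\delta h(z)=z+\sum_{k=2}^{\infty}\frac{\Gamma(\delta+k)}{\Gamma(k)\Gamma(\delta+1)}c_kz^k$. For such $h$ and parameters $\lambda,\gamma,\tau\neq0,\delta$, put $$J_h(z)=1+\frac{1}{\tau}\Big[(1-\lambda)(1-\gamma)\frac{\mathcal{R}^\delta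 h(z)}{z}+(\lambda(\gamma+1)+\gamma)(\mathcal{R}^\delta h)'(z)+\lambda\gamma\big(z(\mathcal{R}^\delta h)''(z)-2\big)-1\Big].$$ For $0\le\beta<1$, $\Theta_{\Sigma}(\tau,\lambda,\gamma,\delta;\beta)$ is the set of $f\in\Sigma$ such that $\operatorname{Re}J_f(z)>\beta$ for all $z\in\mathbb{U}$ and $\operatorname{Re}J_g(w)>\beta$ for all $w\in\mathbb{U}$, where $g$ is the extension of $f^{-1}$ to $\mathbb{U}$. *)

(* Defs.v *)
From Stdlib Require Import Reals Factorial.
From Coquelicot Require Import Coquelicot.
Open Scope C_scope.

Definition inU (z : C) : Prop := (Cmod z < 1)%R.

(* h(z) = sum_k c_k z^k on U (this is "h analytic in U with Taylor
   coefficients c"), normalized: c_0 = 0, c_1 = 1. *)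
Definition normalized_analytic (c : nat -> C) (h : C -> C) : Prop :=
  c 0%nat = 0 /\ c 1%nat = 1 /\
  forall z, inU z -> is_series (fun k => c k * z ^ k) (h z).

Definition univalent_on_U (h : C -> C) : Prop :=
  forall z w, inU z -> inU w -> h z = h w -> z = w.

(* Bi-univalence: f (coefficients a) and g (coefficients b) are normalized,
   analytic and univalent in U, and g is the (continuation of the) inverse
   of f: near 0, g takes values in U and f (g w) = w. *)
Definition bi_univalent_pair (a : nat -> C) (f : C -> C)
    (b : nat -> C) (g : C -> C) : Prop :=
  normalized_analytic a f /\ univalent_on_U f /\
  normalized_analytic b g /\ univalent_on_U g /\
  exists r : R, (0 < r)%R /\
    forall w, (Cmod w < r)%R -> inU (g w) /\ f (g w) = w.

(* Gamma(delta+k) / (Gamma(k) Gamma(delta+1)) = (delta+k-1)! / ((k-1)! delta!)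
   for k >= 1; the k = 0 coefficient of h is 0 anyway. *)
Definition rusch_factor (delta k : nat) : R :=
  (INR (fact (delta + k - 1)) / (INR (fact (k - 1)) * INR (fact delta)))%R.

Definition rusch_coef (delta : nat) (c : nat -> C) (k : nat) : C :=
  match k with
  | O => 0
  | _ => RtoC (rusch_factor delta k) * c k
  end.

(* J_h(z), where F = R^delta h, D1 = (R^delta h)', D2 = (R^delta h)'' *)
Definition J_expr (tau : C) (lam gam : R) (F D1 D2 : C -> C) (z : C) : C :=
  1 + / tau * ( (1 - RtoC lam) * (1 - RtoC gam) * (F z / z)
              + (RtoC lam * (RtoC gam + 1) + RtoC gam) * D1 z
              + RtoC lam * RtoC gam * (z * D2 z - 2) - 1 ).

(* At z = 0 the
   quotient R^delta h(z)/z is understood by its (removable) value 1, which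
   gives J_h(0) = 1 > beta automatically; hence only z <> 0 is required. *)
Definition J_condition (tau : C) (lam gam : R) (delta : nat) (beta : R)
    (c : nat -> C) : Prop :=
  exists F D1 D2 : C -> C,
    (forall z, inU z -> is_series (fun k => rusch_coef delta c k * z ^ k) (F z)) /\
    (forall z, inU z -> is_derive F z (D1 z)) /\
    (forall z, inU z -> is_derive D1 z (D2 z)) /\
    (forall z, inU z -> z <> 0 -> (beta < Re (J_expr tau lam gam F D1 D2 z))%R).

Definition Theta_Sigma (tau : C) (lam gam : R) (delta : nat) (beta : R)
    (a : nat -> C) (f : C -> C) : Prop :=
  exists (b : nat -> C) (g : C -> C),
    bi_univalent_pair a f b g /\
    J_condition tau lam gam delta beta a /\
    J_condition tau lam gam delta beta b.

(* Main.v *)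
Require Import Defs.
From Stdlib Require Import Reals.
From Stdlib Require Import Lra Lia Psatz Arith.
From Coquelicot Require Import Coquelicot.
Open Scope R_scope.

Lemma sum_n_norm_le (a : nat -> C) (b : nat -> R) :
  (forall n, Cmod (a n) <= b n) -> forall n, Cmod (sum_n a n) <= sum_n b n.
Proof.
  intros H n; induction n.
  - rewrite !sum_O. apply H.
  - rewrite !sum_Sn. eapply Rle_trans. apply Cmod_triangle.
    change (plus (sum_n b n) (b (S n))) with (sum_n b n + b (S n)).
    specialize (H (S n)). lra.
Qed.

Lemma series_norm_le (a : nat -> C) (b : nat -> R) (l : C) (L : R) :
  is_series a l -> is_series b L -> (forall n, Cmod (a n) <= b n) ->
  Cmod l <= L.
Proof.
  intros Ha Hb H.
  assert (H1 : is_lim_seq (fun n => Cmod (sum_n a n)) (Cmod l)).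
  { unfold is_lim_seq.
    assert (HH : filterlim (fun n => @norm C_AbsRing C_NormedModule (sum_n a n)) eventually
              (locally (@norm C_AbsRing C_NormedModule l))).
    { eapply filterlim_comp. apply Ha. apply filterlim_norm. }
    exact HH. }
  assert (H2 : is_lim_seq (sum_n b) L) by apply Hb.
  pose proof (is_lim_seq_le _ _ _ _ (sum_n_norm_le a b H) H1 H2) as HH.
  simpl in HH. exact HH.
Qed.

Lemma series_terms_bounded (a : nat -> C) (l : C) :
  is_series a l -> exists M, forall n, Cmod (a n) <= M.
Proof.
  intros Ha.
  destruct (filterlim_bounded (sum_n a)) as [M HM].
  { exists l. apply Ha. }
  exists (2 * M). intros [|n].
  - specialize (HM 0%nat). rewrite sum_O in HM. change (Cmod (a 0%nat)) with (@norm C_AbsRing C_NormedModule (a 0%nat)).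
    assert (0 <= @norm C_AbsRing C_NormedModule (a 0%nat)) by apply norm_ge_0. lra.
  - pose proof (HM (S n)) as H1. pose proof (HM n) as H2. rewrite sum_Sn in H1.
    change (Cmod (plus (sum_n a n) (a (S n))) <= M) in H1.
    change (Cmod (sum_n a n) <= M) in H2.
    assert (E : a (S n) = ((plus (sum_n a n) (a (S n))) + - (sum_n a n))%C).
    { change (plus (sum_n a n) (a (S n))) with (sum_n a n + a (S n))%C. ring. }
    rewrite E. eapply Rle_trans. apply Cmod_triangle. rewrite Cmod_opp. lra.
Qed.

Open Scope C_scope.
Lemma Cmod_RtoC_pos (x : R) : (0 <= x)%R -> Cmod (RtoC x) = x.
Proof. intros. rewrite Cmod_R. now apply Rabs_pos_eq. Qed.

Lemma Cmod_term (c : C) (z : C) (n : nat) : Cmod (c * z ^ n) = (Cmod c * Cmod z ^ n)%R.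
Proof. now rewrite Cmod_mult, Cmod_pow. Qed.

Definition hypS (c : nat -> C) (F : C -> C) :=
  forall z, inU z -> is_series (fun k => c k * z ^ k) (F z).

Lemma radius_ge (c : nat -> C) (F : C -> C) : hypS c F ->
  forall r, (0 <= r < 1)%R -> Rbar_lt (Finite r) (CV_radius (fun n => Cmod (c n))).
Proof.
  intros HF r Hr.
  set (s := ((1 + r) / 2)%R).
  assert (Hs : inU (RtoC s)).
  { unfold inU. rewrite Cmod_RtoC_pos; unfold s; lra. }
  destruct (series_terms_bounded _ _ (HF _ Hs)) as [M HM].
  destruct (CV_radius_bounded (fun n => Cmod (c n))) as [Hub _].
  assert (Hle : Rbar_le (Finite s) (CV_radius (fun n => Cmod (c n)))).
  { apply Hub. exists M. intros n. specialize (HM n).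
    rewrite Cmod_term, Cmod_RtoC_pos in HM by (unfold s; lra).
    rewrite Rabs_pos_eq. exact HM.
    apply Rmult_le_pos. apply Cmod_ge_0. apply pow_le. unfold s; lra. }
  destruct (CV_radius (fun n => Cmod (c n))); simpl in *; unfold s in *; lra.
Qed.

Definition dcoef (c : nat -> C) (n : nat) : C := RtoC (INR (S n)) * c (S n).

Lemma PS_derive_Cmod (c : nat -> C) n :
  PS_derive (fun n => Cmod (c n)) n = Cmod (dcoef c n).
Proof.
  unfold PS_derive, dcoef. rewrite Cmod_mult, Cmod_RtoC_pos. reflexivity.
  apply pos_INR.
Qed.

Lemma abs_conv (c : nat -> C) (F : C -> C) : hypS c F ->
  forall r, (0 <= r < 1)%R -> ex_series (fun n => (Cmod (c n) * r ^ n)%R).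
Proof.
  intros HF r Hr.
  pose proof (CV_disk_inside (fun n => Cmod (c n)) r) as H.
  rewrite Rabs_pos_eq in H by lra.
  eapply ex_series_ext. 2: apply H. 2: now apply (radius_ge c F).
  intros n. simpl. rewrite Rabs_pos_eq. reflexivity.
  apply Rmult_le_pos. apply Cmod_ge_0. apply pow_le. lra.
Qed.

Definition CSeries (a : nat -> C) : C :=
  @iota (CompleteNormedModule.CompleteSpace C_AbsRing C_CompleteNormedModule) (fun x : C => is_series a x).

Lemma is_series_uniq (a : nat -> C) (l1 l2 : C) : is_series a l1 -> is_series a l2 -> l1 = l2.
Proof. intros H1 H2. exact (filterlim_locally_unique _ _ _ H1 H2). Qed.

Lemma CSeries_correct (a : nat -> C) : ex_series a -> is_series a (CSeries a).
Proof.
  intros [l Hl]. unfold CSeries.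
  assert (E : @iota (CompleteNormedModule.CompleteSpace C_AbsRing C_CompleteNormedModule) (fun x : C => is_series a x) = l).
  { apply (iota_filterlim_locally (sum_n a) l). exact Hl. }
  rewrite E. exact Hl.
Qed.

Lemma dseries_hyp (c : nat -> C) (F : C -> C) : hypS c F ->
  hypS (dcoef c) (fun z => CSeries (fun n => dcoef c n * z ^ n)).
Proof.
  intros HF z Hz. apply CSeries_correct.
  set (r := Cmod z).
  assert (Hr : (0 <= r < 1)%R) by (split; [apply Cmod_ge_0| exact Hz]).
  assert (Hrad : Rbar_lt (Finite r) (CV_radius (PS_derive (fun n => Cmod (c n))))).
  { rewrite CV_radius_derive. now apply (radius_ge c F). }
  pose proof (CV_disk_inside (PS_derive (fun n => Cmod (c n))) r) as H. rewrite Rabs_pos_eq in H by lra.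
  specialize (H Hrad).
  apply (@ex_series_le C_AbsRing C_CompleteNormedModule (fun n => dcoef c n * z ^ n) (fun n => Rabs (PS_derive (fun n => Cmod (c n)) n * r ^ n)%R)).
  2: exact H.
  intros n. change (norm ?x) with (Cmod x). rewrite Cmod_term, PS_derive_Cmod.
  unfold r. apply Rle_abs.
Qed.

Lemma mult_C (a b : C) : @mult C_Ring a b = a * b. Proof. reflexivity. Qed.

Lemma deriv_from_bound (F : C -> C) (z l : C) :
  (forall eps, (0 < eps)%R -> exists d, (0 < d)%R /\ forall y, (Cmod (y - z) < d)%R ->
     (Cmod (F y - F z - (y - z) * l) <= eps * Cmod (y - z))%R) ->
  @is_derive C_AbsRing C_NormedModule F z l.
Proof.
  intros H. unfold is_derive, filterdiff. split.
  - apply is_linear_scal_l.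
  - intros x0 Hx0. assert (Ez : z = x0) by (apply (@is_filter_lim_locally_unique C_AbsRing (AbsRing_NormedModule C_AbsRing)); exact Hx0). subst x0.
    intros eps.
    destruct (H eps (cond_pos eps)) as [d [Hd Hb]].
    exists (mkposreal d Hd). intros y Hy. apply Hb. exact Hy.
Qed.

Lemma is_series_shift1 (a : nat -> C) (l : C) :
  is_series a l -> is_series (fun k => a (S k)) (l - a 0%nat).
Proof.
  intros H. apply is_series_incr_1.
  match goal with |- is_series _ ?L => replace L with l end. exact H.
  unfold plus; simpl. ring.
Qed.

Definition Ed (y z : C) (n : nat) : C :=
  y ^ (S (S n)) - z ^ (S (S n)) - RtoC (INR (S (S n))) * (y - z) * z ^ (S n).

Lemma Ed_0 y z : Ed y z 0 = (y - z) * (y - z).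
Proof. unfold Ed. simpl. rewrite RtoC_plus. ring. Qed.

Lemma Ed_S y z n : Ed y z (S n) = y * Ed y z n + RtoC (INR (S (S n))) * ((y - z) * (y - z)) * z ^ (S n).
Proof.
  unfold Ed. rewrite (S_INR (S (S n))). rewrite RtoC_plus.
  change (y ^ S (S (S n))) with (y * y ^ (S (S n))).
  change (z ^ S (S (S n))) with (z * z ^ (S (S n))).
  change (z ^ S (S n)) with (z * z ^ (S n)).
  change (y ^ S (S n)) with (y * y ^ (S n)). ring.
Qed.

Lemma Ed_bound (y z : C) (rho : R) :
  (Cmod y <= rho)%R -> (Cmod z <= rho)%R ->
  forall n, (Cmod (Ed y z n) <= INR (S n) * INR (S (S n)) / 2 * (Cmod (y - z) ^ 2 * rho ^ n))%R.
Proof.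
  intros Hy Hz. assert (Hr : (0 <= rho)%R) by (pose proof (Cmod_ge_0 y); lra).
  set (h := Cmod (y - z)). assert (Hh : (0 <= h)%R) by apply Cmod_ge_0.
  induction n.
  - rewrite Ed_0, Cmod_mult. simpl. fold h. lra.
  - rewrite Ed_S. eapply Rle_trans. apply Cmod_triangle.
    rewrite !Cmod_mult, Cmod_pow, Cmod_RtoC_pos by apply pos_INR. fold h.
    assert (H1 : (Cmod y * Cmod (Ed y z n) <= rho * (INR (S n) * INR (S (S n)) / 2 * (h ^ 2 * rho ^ n)))%R).
    { apply Rmult_le_compat; auto using Cmod_ge_0. }
    assert (H2 : (Cmod z ^ S n <= rho ^ S n)%R) by (apply pow_incr; split; auto using Cmod_ge_0).
    assert (H3 : (INR (S (S n)) * (h * h) * Cmod z ^ S n <= INR (S (S n)) * (h * h) * rho ^ S n)%R).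
    { apply Rmult_le_compat_l; auto. apply Rmult_le_pos. apply pos_INR. nra. }
    assert (E : (INR (S (S n)) * INR (S (S (S n))) / 2 * (h ^ 2 * rho ^ S n) =
       rho * (INR (S n) * INR (S (S n)) / 2 * (h ^ 2 * rho ^ n)) + INR (S (S n)) * (h * h) * rho ^ S n)%R).
    { rewrite !S_INR. simpl. field. }
    rewrite E. lra.
Qed.

Lemma ps_deriv (c : nat -> C) (F : C -> C) : hypS c F ->
  forall z, inU z -> @is_derive C_AbsRing C_NormedModule F z (CSeries (fun n => dcoef c n * z ^ n)).
Proof.
  intros HF z Hz.
  set (Sz := CSeries (fun n => dcoef c n * z ^ n)).
  assert (HS : is_series (fun n => dcoef c n * z ^ n) Sz) by exact (dseries_hyp c F HF z Hz).
  set (rho := ((1 + Cmod z) / 2)%R).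
  assert (Hz0 : (0 <= Cmod z)%R) by apply Cmod_ge_0.
  assert (Hz1 : (Cmod z < 1)%R) by exact Hz.
  assert (Hrho : (Cmod z < rho < 1)%R) by (unfold rho; lra).
  set (b := fun n => Rabs (PS_derive (PS_derive (fun n => Cmod (c n))) n * rho ^ n)).
  assert (Hb : ex_series b).
  { unfold b. apply CV_disk_inside. rewrite !CV_radius_derive.
    rewrite Rabs_pos_eq by lra. apply (radius_ge c F HF). lra. }
  set (K := Series b).
  assert (HK : is_series b K) by (apply Series_correct; exact Hb).
  apply deriv_from_bound. intros eps Heps.
  assert (HK1 : (0 < Rabs K + 1)%R) by (pose proof (Rabs_pos K); lra).
  exists (Rmin (rho - Cmod z) (eps / (Rabs K + 1))). split.
  { apply Rmin_pos. lra. apply Rdiv_lt_0_compat; lra. }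
  intros y Hy.
  pose proof (Rmin_l (rho - Cmod z) (eps / (Rabs K + 1))) as Hm1.
  pose proof (Rmin_r (rho - Cmod z) (eps / (Rabs K + 1))) as Hm2.
  set (h := Cmod (y - z)) in *.
  assert (Hh0 : (0 <= h)%R) by apply Cmod_ge_0.
  assert (Hyr : (Cmod y <= rho)%R).
  { replace y with (z + (y - z)) by ring. eapply Rle_trans. apply Cmod_triangle. fold h. lra. }
  assert (Hyu : inU y) by (unfold inU; lra).
  pose proof (is_series_shift1 _ _ (is_series_shift1 _ _ (HF y Hyu))) as H1.
  pose proof (is_series_shift1 _ _ (is_series_shift1 _ _ (HF z Hz))) as H2.
  pose proof (is_series_shift1 _ _ HS) as H3.
  pose proof (is_series_minus _ _ _ _ (is_series_minus _ _ _ _ H1 H2) (is_series_scal (y - z) _ _ H3)) as H4.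
  simpl in H4.
  assert (H5 : is_series (fun n => c (S (S n)) * Ed y z n) (F y - F z - (y - z) * Sz)).
  { match type of H4 with is_series _ ?L => replace L with (F y - F z - (y - z) * Sz) in H4 end.
    eapply is_series_ext. 2: exact H4. intros n.
    assert (E : c (S (S n)) * y ^ (S (S n)) + - (c (S (S n)) * z ^ (S (S n)))
               + - ((y - z) * (dcoef c (S n) * z ^ (S n))) = c (S (S n)) * Ed y z n).
    { unfold Ed, dcoef. change (y ^ S (S n)) with (y * (y * y ^ n)). change (z ^ S (S n)) with (z * (z * z ^ n)).
      change (z ^ S n) with (z * z ^ n). ring. }
    exact E.
    assert (E : F y - F z - (y - z) * Sz = (F y - c 0%nat * 1 - c 1%nat * (y * 1))
       + - (F z - c 0%nat * 1 - c 1%nat * (z * 1)) + - ((y - z) * (Sz - dcoef c 0 * 1))).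
    { unfold dcoef. change (INR 1) with 1%R. ring. }
    exact E. }
  assert (H6 : is_series (fun n => (h ^ 2 / 2 * b n)%R) (h ^ 2 / 2 * K)%R).
  { exact (is_series_scal _ _ _ HK). }
  assert (H7 : (Cmod (F y - F z - (y - z) * Sz) <= h ^ 2 / 2 * K)%R).
  { eapply series_norm_le. exact H5. exact H6. intros n.
    change (Cmod (c (S (S n)) * Ed y z n) <= h ^ 2 / 2 * b n)%R.
    rewrite Cmod_mult. eapply Rle_trans.
    apply Rmult_le_compat_l. apply Cmod_ge_0. apply (Ed_bound y z rho Hyr (Rlt_le _ _ (proj1 Hrho)) n).
    unfold b, PS_derive. rewrite Rabs_pos_eq. fold h. right. field.
    apply Rmult_le_pos. apply Rmult_le_pos. apply pos_INR. apply Rmult_le_pos. apply pos_INR.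
    apply Cmod_ge_0. apply pow_le. lra. }
  assert (HKa : (K <= Rabs K)%R) by apply Rle_abs.
  assert (HKp : (0 <= Rabs K)%R) by apply Rabs_pos.
  assert (Hh : (h * (Rabs K + 1) <= eps)%R).
  { assert (h < eps / (Rabs K + 1))%R by lra.
    apply Rlt_le. apply (Rmult_lt_compat_r (Rabs K + 1)) in H; [|lra].
    unfold Rdiv in H. rewrite Rmult_assoc, Rinv_l, Rmult_1_r in H; lra. }
  change (Cmod (y - z)) with h. nra.
Qed.

Fixpoint fsum (n : nat) (f : nat -> C) : C :=
  match n with O => 0 | S n => fsum n f + f n end.

Lemma fsum_ext n f g : (forall j, (j < n)%nat -> f j = g j) -> fsum n f = fsum n g.
Proof. induction n; intros H; simpl; auto. rewrite IHn, H; auto. Qed.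

Lemma fsum_plus n f g : fsum n (fun j => f j + g j) = fsum n f + fsum n g.
Proof. induction n; simpl. ring. rewrite IHn. ring. Qed.

Lemma fsum_minus n f g : fsum n (fun j => f j - g j) = fsum n f - fsum n g.
Proof. induction n; simpl. ring. rewrite IHn. ring. Qed.

Lemma fsum_scal n c f : fsum n (fun j => c * f j) = c * fsum n f.
Proof. induction n; simpl. ring. rewrite IHn. ring. Qed.

Lemma fsum_conj n f : fsum n (fun j => Cconj (f j)) = Cconj (fsum n f).
Proof. induction n; simpl. unfold Cconj, RtoC; simpl. rewrite Ropp_0. reflexivity. rewrite IHn, Cplus_conj. reflexivity. Qed.

Lemma fsum_const n c : fsum n (fun _ => c) = RtoC (INR n) * c.
Proof. induction n; simpl fsum. simpl. ring. rewrite IHn, S_INR, RtoC_plus. ring. Qed.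

Lemma Re_plus a b : Re (a + b) = (Re a + Re b)%R.
Proof. reflexivity. Qed.

Lemma fsum_norm_Re n f g : (forall j, (j < n)%nat -> (Cmod (f j) <= Re (g j))%R) ->
  (Cmod (fsum n f) <= Re (fsum n g))%R.
Proof.
  induction n; intros H; simpl fsum.
  - rewrite Cmod_0. simpl. lra.
  - eapply Rle_trans. apply Cmod_triangle. rewrite Re_plus.
    apply Rplus_le_compat. apply IHn; auto. apply H; auto.
Qed.

Lemma fsum_norm n f M : (forall j, (j < n)%nat -> (Cmod (f j) <= M)%R) ->
  (Cmod (fsum n f) <= INR n * M)%R.
Proof.
  induction n; intros H; simpl fsum.
  - rewrite Cmod_0. simpl. lra.
  - eapply Rle_trans. apply Cmod_triangle. rewrite S_INR.
    assert (Cmod (f n) <= M)%R by auto. assert (Cmod (fsum n f) <= INR n * M)%R by auto. lra.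
Qed.

Lemma is_series_zeros (a : nat -> C) : (forall n, a n = 0) -> is_series a (RtoC 0).
Proof.
  intros H. unfold is_series.
  apply filterlim_ext with (fun _ => (0 : C)).
  - intros n. induction n. rewrite sum_O, H. reflexivity.
    rewrite sum_Sn, <- IHn, H. change (RtoC 0 = RtoC 0 + RtoC 0). ring.
  - apply filterlim_const.
Qed.

Lemma fsum_series (n : nat) (a : nat -> nat -> C) (l : nat -> C) :
  (forall j, (j < n)%nat -> is_series (a j) (l j)) ->
  is_series (fun m => fsum n (fun j => a j m)) (fsum n l).
Proof.
  induction n; intros H; simpl.
  - apply is_series_zeros. reflexivity.
  - apply (is_series_plus (fun m => fsum n (fun j => a j m)) (a n)). apply IHn; auto. apply H; auto.
Qed.

Lemma delta_series (k : nat) (x : C) : is_series (fun m => if Nat.eqb m k then x else RtoC 0) x.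
Proof.
  revert x. induction k; intros x.
  - apply is_series_decr_1. simpl.
    match goal with |- is_series _ ?L => replace L with (RtoC 0) end.
    apply is_series_zeros. reflexivity.
    unfold plus, opp; simpl. ring.
  - apply is_series_decr_1. simpl.
    match goal with |- is_series _ ?L => replace L with x end.
    apply IHk. unfold plus, opp; simpl. ring.
Qed.

Definition om (N : nat) : C := (cos (2 * PI / INR N), sin (2 * PI / INR N)).

Lemma om_pow N j : om N ^ j = (cos (INR j * (2 * PI / INR N)), sin (INR j * (2 * PI / INR N))).
Proof.
  induction j.
  - simpl. rewrite !Rmult_0_l, cos_0, sin_0. reflexivity.
  - rewrite Cpow_S, IHj. unfold om, Cmult; simpl fst; simpl snd.
    rewrite S_INR, Rmult_plus_distr_r, Rmult_1_l, cos_plus, sin_plus.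
    f_equal; ring.
Qed.

Lemma om_N N : (0 < N)%nat -> om N ^ N = 1.
Proof.
  intros HN. rewrite om_pow.
  replace (INR N * (2 * PI / INR N))%R with (2 * PI)%R.
  rewrite cos_2PI, sin_2PI. reflexivity.
  field. apply not_0_INR. lia.
Qed.

Lemma om_ne1 N s : (0 < s < N)%nat -> om N ^ s <> 1.
Proof.
  intros Hs E. rewrite om_pow in E.
  set (x := (INR s * (2 * PI / INR N))%R) in E.
  assert (H1 : (0 < x / 2 < PI)%R).
  { assert (0 < INR s)%R by (apply lt_0_INR; lia).
    assert (INR s < INR N)%R by (apply lt_INR; lia).
    assert (0 < INR N)%R by lra. pose proof PI_RGT_0.
    unfold x. split.
    - apply Rdiv_lt_0_compat; [|lra]. apply Rmult_lt_0_compat; [lra|]. apply Rdiv_lt_0_compat; lra.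
    - replace (INR s * (2 * PI / INR N) / 2)%R with (PI * (INR s / INR N))%R by (field; lra).
      rewrite <- (Rmult_1_r PI) at 2. apply Rmult_lt_compat_l. lra.
      apply (Rmult_lt_reg_r (INR N)). lra. unfold Rdiv. rewrite Rmult_assoc, Rinv_l; lra. }
  assert (Hc : cos x = 1%R).
  { apply (f_equal fst) in E. simpl in E. exact E. }
  replace x with (2 * (x / 2))%R in Hc by field.
  rewrite cos_2a_sin in Hc. pose proof (sin_gt_0 (x / 2) (proj1 H1) (proj2 H1)). nra.
Qed.

Lemma Cmod_om N : Cmod (om N) = 1%R.
Proof.
  unfold Cmod, om. simpl fst; simpl snd.
  pose proof (sin2_cos2 (2 * PI / INR N)) as H. unfold Rsqr in H.
  replace (cos (2 * PI / INR N) ^ 2 + sin (2 * PI / INR N) ^ 2)%R with 1%R by (simpl; lra).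
  apply sqrt_1.
Qed.

Lemma Cmod_om_pow N j : Cmod (om N ^ j) = 1%R.
Proof. rewrite Cmod_pow, Cmod_om. apply pow1. Qed.

Lemma om_ne0 N : om N <> 0.
Proof. intros E. pose proof (Cmod_om N). rewrite E, Cmod_0 in H. lra. Qed.

Lemma conj_om N : (0 < N)%nat -> Cconj (om N) = om N ^ (N - 1).
Proof.
  intros HN.
  assert (H1 : om N * Cconj (om N) = 1).
  { rewrite <- Cmod2_conj, Cmod_om. simpl. f_equal; ring. }
  assert (H2 : om N * om N ^ (N - 1) = 1).
  { rewrite <- Cpow_S. replace (S (N - 1)) with N by lia. now apply om_N. }
  assert (H3 := om_ne0 N).
  transitivity (/ om N * (om N * Cconj (om N))). field. auto.
  rewrite H1, <- H2. field. auto.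
Qed.

Definition G (N t : nat) : C := fsum N (fun j => om N ^ (j * t)).

Lemma fsum_geom w n : (w - 1) * fsum n (fun j => w ^ j) = w ^ n - 1.
Proof.
  induction n; simpl fsum. simpl. ring.
  rewrite Cmult_plus_distr_l, IHn, Cpow_S. ring.
Qed.

Lemma om_pow_N_mult N q : (0 < N)%nat -> om N ^ (N * q) = 1.
Proof. intros HN. rewrite Cpow_mult_r, om_N by auto. apply Cpow_1_l. Qed.

Lemma om_pow_red N q s : (0 < N)%nat -> om N ^ (q * N + s) = om N ^ s.
Proof.
  intros HN. rewrite Cpow_add_r, Nat.mul_comm, om_pow_N_mult by auto. ring.
Qed.

Lemma G_zero N t : (exists q s, t = (q * N + s)%nat /\ (0 < s < N)%nat) -> G N t = 0.
Proof.
  intros [q [s [Ht Hs]]].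
  assert (HN : (0 < N)%nat) by lia.
  set (w := om N ^ t).
  assert (E : G N t = fsum N (fun j => w ^ j)).
  { unfold G. apply fsum_ext. intros j _. unfold w. rewrite <- Cpow_mult_r. f_equal. lia. }
  assert (HwN : w ^ N = 1).
  { unfold w. rewrite <- Cpow_mult_r, Nat.mul_comm. now apply om_pow_N_mult. }
  assert (Hw1 : w - 1 <> 0).
  { unfold w. rewrite Ht, om_pow_red by auto. intros E2. apply (om_ne1 N s Hs).
    transitivity (om N ^ s - 1 + 1). ring. rewrite E2. ring. }
  pose proof (fsum_geom w N) as Hg. rewrite HwN in Hg.
  rewrite E. transitivity (/ (w - 1) * ((w - 1) * fsum N (fun j => w ^ j))).
  field. auto. rewrite Hg. ring.
Qed.

Lemma G_full N q : (0 < N)%nat -> G N (q * N) = RtoC (INR N).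
Proof.
  intros HN. unfold G. rewrite (fsum_ext N _ (fun _ => 1)).
  rewrite fsum_const. ring.
  intros j _. replace (j * (q * N))%nat with (N * (j * q))%nat by lia. now apply om_pow_N_mult.
Qed.

Lemma Cmod_G N t : (Cmod (G N t) <= INR N)%R.
Proof.
  unfold G. rewrite <- (Rmult_1_r (INR N)). apply fsum_norm. intros j _.
  rewrite Cmod_om_pow. lra.
Qed.

Lemma avg_series (e : nat -> C) (h : C -> C) (r : R) (N p : nat) :
  hypS e h -> (0 <= r < 1)%R ->
  is_series (fun m => e m * RtoC (r ^ m) * G N (m + p))
    (fsum N (fun j => h (RtoC r * om N ^ j) * om N ^ (j * p))).
Proof.
  intros HF Hr.
  eapply is_series_ext. 2: apply (fsum_series N (fun j m => e m * (RtoC r * om N ^ j) ^ m * om N ^ (j * p))).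
  - intros m. simpl. unfold G. rewrite <- fsum_scal. apply fsum_ext. intros j _.
    rewrite Cpow_mult_l, <- RtoC_pow, <- Cpow_mult_r, Nat.mul_add_distr_l, Cpow_add_r. ring.
  - intros j _.
    assert (Hz : inU (RtoC r * om N ^ j)).
    { unfold inU. rewrite Cmod_mult, Cmod_om_pow, Cmod_RtoC_pos by lra. lra. }
    pose proof (is_series_scal (om N ^ (j * p)) _ _ (HF _ Hz)) as H.
    set (z := RtoC r * om N ^ j) in *. set (c := om N ^ (j * p)) in *.
    replace (h z * c) with (c * h z) by ring.
    eapply is_series_ext. 2: exact H. intros m.
    assert (E2 : c * (e m * z ^ m) = e m * z ^ m * c) by ring. exact E2.
Qed.

Open Scope R_scope.
Open Scope C_scope.

Lemma Cmod_real (x : C) : Im x = 0%R -> Cmod x = Rabs (Re x).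
Proof. destruct x as [a b]. simpl. intros ->. apply Cmod_R. Qed.

Definition tb (e : nat -> C) (r : R) (N m : nat) : R :=
  if Nat.leb (N - 2) m then (Cmod (e m) * r ^ m)%R else 0%R.

Lemma tb_nonneg e r N m : (0 <= r)%R -> (0 <= tb e r N m)%R.
Proof.
  intros Hr. unfold tb. destruct (Nat.leb (N - 2) m). apply Rmult_le_pos. apply Cmod_ge_0.
  apply pow_le; auto. lra.
Qed.

Lemma term_bound e r N m (g : C) : (0 <= r)%R -> (N - 2 <= m)%nat -> (Cmod g <= INR N)%R ->
  (Cmod (e m * RtoC (r ^ m) * g) <= INR N * tb e r N m)%R.
Proof.
  intros Hr Hm Hg. unfold tb. replace (Nat.leb (N - 2) m) with true by (symmetry; apply Nat.leb_le; lia).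
  rewrite !Cmod_mult, Cmod_RtoC_pos by (apply pow_le; lra).
  assert (0 <= Cmod (e m) * r ^ m)%R by (apply Rmult_le_pos; [apply Cmod_ge_0| apply pow_le; lra]).
  rewrite (Rmult_comm (INR N)). apply Rmult_le_compat_l; auto.
Qed.

Lemma cara_N e h beta r N k T :
  hypS e h -> e 0%nat = 1 -> (forall z, inU z -> z <> 0 -> (beta < Re (h z))%R) ->
  (1 <= k <= 2)%nat -> (0 < r < 1)%R -> (5 <= N)%nat ->
  is_series (tb e r N) T ->
  (Cmod (e k) * r ^ k <= 2 * (1 - beta) + 5 * T)%R.
Proof.
  intros HF He0 Hpos Hk Hr HN HT.
  assert (HN0 : (0 < N)%nat) by lia.
  assert (HNR : (5 <= INR N)%R) by (replace 5%R with (INR 5) by (simpl; ring); apply le_INR; auto).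
  set (NR := RtoC (INR N)).
  pose proof (avg_series e h r N ((N - 1) * k) HF (conj (Rlt_le _ _ (proj1 Hr)) (proj2 Hr))) as HA1.
  pose proof (avg_series e h r N k HF (conj (Rlt_le _ _ (proj1 Hr)) (proj2 Hr))) as HA2.
  pose proof (avg_series e h r N 0 HF (conj (Rlt_le _ _ (proj1 Hr)) (proj2 Hr))) as HC0.
  set (A1 := fsum N (fun j => h (RtoC r * om N ^ j) * om N ^ (j * ((N - 1) * k)))) in *.
  set (A2 := fsum N (fun j => h (RtoC r * om N ^ j) * om N ^ (j * k))) in *.
  set (C0 := fsum N (fun j => h (RtoC r * om N ^ j) * om N ^ (j * 0))) in *.
  assert (HT2 : is_series (fun m => INR N * tb e r N m)%R (INR N * T)%R) by exact (is_series_scal _ _ _ HT).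
  assert (HT3 : is_series (fun m => 2 * INR N * tb e r N m)%R (2 * INR N * T)%R) by exact (is_series_scal _ _ _ HT).
  assert (Hr0 : (0 <= r)%R) by lra.
  assert (B1 : (Cmod (A1 - NR * e k * RtoC (r ^ k)) <= 2 * INR N * T)%R).
  { pose proof (is_series_minus _ _ _ _ HA1 (delta_series k (NR * e k * RtoC (r ^ k)))) as H.
    apply (series_norm_le _ _ _ _ H HT3). intros m.
    change (Cmod (e m * RtoC (r ^ m) * G N (m + (N - 1) * k) - (if Nat.eqb m k then NR * e k * RtoC (r ^ k) else RtoC 0)) <= 2 * INR N * tb e r N m)%R.
    assert (Htb := tb_nonneg e r N m Hr0).
    destruct (Nat.eqb_spec m k) as [->|Hmk].
    - replace (k + (N - 1) * k)%nat with (k * N)%nat by nia. rewrite G_full by auto.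
      fold NR. replace (e k * RtoC (r ^ k) * NR - NR * e k * RtoC (r ^ k)) with (RtoC 0) by ring.
      rewrite Cmod_0. nra.
    - destruct (le_lt_dec (N - 2) m) as [Hm|Hm].
      + replace (e m * RtoC (r ^ m) * G N (m + (N - 1) * k) - RtoC 0) with (e m * RtoC (r ^ m) * G N (m + (N - 1) * k)) by ring.
        eapply Rle_trans. apply (term_bound e r N m); [lra | lia | apply Cmod_G]. nra.
      + rewrite G_zero. replace (e m * RtoC (r ^ m) * RtoC 0 - RtoC 0) with (RtoC 0) by ring.
        rewrite Cmod_0. nra.
        destruct (le_lt_dec m k).
        * exists (k - 1)%nat, (N + m - k)%nat. split; [nia| lia].
        * exists k, (m - k)%nat. split; [nia| lia]. }
  assert (B2 : (Cmod A2 <= INR N * T)%R).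
  { apply (series_norm_le _ _ _ _ HA2 HT2). intros m.
    assert (Htb := tb_nonneg e r N m Hr0).
    destruct (le_lt_dec (N - 2) m) as [Hm|Hm].
    + apply (term_bound e r N m); [lra | lia | apply Cmod_G].
    + rewrite G_zero. rewrite Cmult_0_r, Cmod_0. nra.
      exists 0%nat, (m + k)%nat. split; lia. }
  assert (B3 : (Cmod (C0 - NR) <= INR N * T)%R).
  { pose proof (is_series_minus _ _ _ _ HC0 (delta_series 0 NR)) as H.
    apply (series_norm_le _ _ _ _ H HT2). intros m.
    change (Cmod (e m * RtoC (r ^ m) * G N (m + 0) - (if Nat.eqb m 0 then NR else RtoC 0)) <= INR N * tb e r N m)%R.
    assert (Htb := tb_nonneg e r N m Hr0).
    destruct (Nat.eqb_spec m 0) as [->|Hm0].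
    - replace (0 + 0)%nat with (0 * N)%nat by lia. rewrite G_full by auto. rewrite He0. simpl pow.
      fold NR. replace (1 * RtoC 1 * NR - NR) with (RtoC 0) by ring. rewrite Cmod_0. nra.
    - destruct (le_lt_dec (N - 2) m) as [Hm|Hm].
      + replace (e m * RtoC (r ^ m) * G N (m + 0) - RtoC 0) with (e m * RtoC (r ^ m) * G N (m + 0)) by ring.
        apply (term_bound e r N m); [lra | lia | apply Cmod_G].
      + rewrite G_zero. replace (e m * RtoC (r ^ m) * RtoC 0 - RtoC 0) with (RtoC 0) by ring.
        rewrite Cmod_0. nra.
        exists 0%nat, m. split; lia. }
  set (z := fun j => RtoC r * om N ^ j).
  set (Q := fun j => h (z j) + Cconj (h (z j)) - RtoC (2 * beta)).
  set (A := fsum N (fun j => Q j * om N ^ (j * ((N - 1) * k)))).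
  assert (HG0 : G N ((N - 1) * k) = 0).
  { apply G_zero. exists (k - 1)%nat, (N - k)%nat. split; nia. }
  assert (EA : A = A1 + Cconj A2).
  { unfold A, Q.
    rewrite (fsum_ext N _ (fun j => h (z j) * om N ^ (j * ((N - 1) * k)) + Cconj (h (z j) * om N ^ (j * k))
                                 - RtoC (2 * beta) * om N ^ (j * ((N - 1) * k)))).
    rewrite fsum_minus, fsum_plus, fsum_conj, fsum_scal.
    unfold G in HG0. rewrite HG0. unfold A1, A2, z. ring.
    intros j _. rewrite Cmult_conj, Cpow_conj, conj_om by auto. rewrite <- Cpow_mult_r.
    replace ((N - 1) * (j * k))%nat with (j * ((N - 1) * k))%nat by ring. ring. }
  assert (B4 : (Cmod A <= Re (fsum N Q))%R).
  { unfold A. apply fsum_norm_Re. intros j Hj.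
    rewrite Cmod_mult, Cmod_om_pow, Rmult_1_r.
    assert (Hz : inU (z j)).
    { unfold inU, z. rewrite Cmod_mult, Cmod_om_pow, Cmod_RtoC_pos by lra. lra. }
    assert (Hz0 : z j <> 0).
    { intros E. apply (f_equal Cmod) in E. unfold z in E.
      rewrite Cmod_mult, Cmod_om_pow, Cmod_RtoC_pos, Cmod_0 in E by lra. lra. }
    pose proof (Hpos _ Hz Hz0) as Hp.
    assert (ReQ : Re (Q j) = (2 * Re (h (z j)) - 2 * beta)%R).
    { unfold Q, Re, Cminus, Cplus, Copp, Cconj, RtoC; simpl. ring. }
    assert (ImQ : Im (Q j) = 0%R).
    { unfold Q, Im, Cminus, Cplus, Copp, Cconj, RtoC; simpl. ring. }
    rewrite (Cmod_real _ ImQ), ReQ. rewrite Rabs_pos_eq; lra. }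
  assert (EQ : Re (fsum N Q) = (2 * Re C0 - 2 * beta * INR N)%R).
  { unfold Q. rewrite fsum_minus, fsum_plus, fsum_conj, fsum_const.
    replace (fsum N (fun j => h (z j))) with C0.
    unfold Re, Cconj, Cminus, Cplus, Copp, Cmult, RtoC; simpl. ring.
    unfold C0, z. apply fsum_ext. intros j _. rewrite Nat.mul_0_r. simpl. ring. }
  assert (B5 : (Re C0 <= INR N + INR N * T)%R).
  { replace (Re C0) with (INR N + Re (C0 - NR))%R.
    pose proof (re_le_Cmod (C0 - NR)). pose proof (Rle_abs (Re (C0 - NR))). lra.
    unfold NR, Re, Cminus, Cplus, Copp, RtoC; simpl. ring. }
  assert (B6 : (Cmod (NR * e k * RtoC (r ^ k)) <= Cmod A1 + 2 * INR N * T)%R).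
  { replace (NR * e k * RtoC (r ^ k)) with (A1 + - (A1 - NR * e k * RtoC (r ^ k))) by ring.
    eapply Rle_trans. apply Cmod_triangle. rewrite Cmod_opp. lra. }
  assert (B7 : (Cmod A1 <= Cmod A + Cmod A2)%R).
  { replace A1 with (A + - Cconj A2) by (rewrite EA; ring).
    eapply Rle_trans. apply Cmod_triangle. rewrite Cmod_opp, Cmod_conj. lra. }
  rewrite !Cmod_mult, Cmod_RtoC_pos in B6 by (apply pow_le; lra).
  unfold NR in B6. rewrite Cmod_RtoC_pos in B6 by lra.
  assert (HX : (INR N * (Cmod (e k) * r ^ k) <= INR N * (2 * (1 - beta) + 5 * T))%R) by nra.
  apply Rmult_le_reg_l in HX; lra.
Qed.

Lemma aux1 (L v : R) : L = (L - v + v)%R. Proof. ring. Qed.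
Lemma aux2 (x : R) : x = (x + - 0)%R. Proof. ring. Qed.

Lemma tail_series (a : nat -> R) (L : R) (n : nat) : (0 < n)%nat -> is_series a L ->
  is_series (fun m => if Nat.leb n m then a m else 0%R) (L - sum_n a (pred n))%R.
Proof.
  intros Hn HS.
  apply (is_series_decr_n _ n). auto.
  match goal with |- is_series _ (plus _ (opp (sum_n ?f _))) =>
    assert (H : forall p, (p < n)%nat -> sum_n f p = 0%R) end.
  { induction p; intros Hp. rewrite sum_O. replace (Nat.leb n 0) with false. reflexivity.
    symmetry; apply Nat.leb_gt; lia.
    rewrite sum_Sn, IHp by lia. replace (Nat.leb n (S p)) with false. unfold plus; simpl; ring.
    symmetry; apply Nat.leb_gt; lia. }
  rewrite H by lia.
  match goal with |- is_series _ ?X => replace X with (L - sum_n a (pred n))%R by (unfold plus, opp; simpl; apply aux2) end.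
  apply is_series_ext with (fun k => a (n + k)%nat).
  intros k. replace (Nat.leb n (n + k)) with true. reflexivity. symmetry; apply Nat.leb_le; lia.
  apply is_series_incr_n. auto.
  match goal with |- is_series _ ?X => replace X with L by (unfold plus; simpl; apply aux1) end. exact HS.
Qed.

Lemma cara_r e h beta k r :
  hypS e h -> e 0%nat = 1 -> (forall z, inU z -> z <> 0 -> (beta < Re (h z))%R) ->
  (1 <= k <= 2)%nat -> (0 < r < 1)%R ->
  (Cmod (e k) * r ^ k <= 2 * (1 - beta))%R.
Proof.
  intros HF He0 Hpos Hk Hr.
  set (a := fun m => (Cmod (e m) * r ^ m)%R).
  assert (Ha : ex_series a) by (apply (abs_conv e h HF); lra).
  set (SS := Series a).
  assert (HS : is_series a SS) by (apply Series_correct; exact Ha).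
  apply Rnot_lt_le. intros Hlt.
  set (eps := ((Cmod (e k) * r ^ k - 2 * (1 - beta)) / 10)%R).
  assert (Heps : (0 < eps)%R) by (unfold eps; lra).
  assert (Hev := HS (ball SS (mkposreal eps Heps)) (locally_ball SS (mkposreal eps Heps))).
  destruct Hev as [N1 HN1].
  set (N := (N1 + 5)%nat).
  assert (HT := tail_series a SS (N - 2) ltac:(lia) HS).
  assert (HT' : is_series (tb e r N) (SS - sum_n a (pred (N - 2)))%R).
  { eapply is_series_ext. 2: exact HT. intros m. unfold tb, a. reflexivity. }
  pose proof (cara_N e h beta r N k _ HF He0 Hpos Hk Hr ltac:(lia) HT') as Hc.
  specialize (HN1 (pred (N - 2)) ltac:(lia)).
  change (Rabs (sum_n a (pred (N - 2)) - SS) < eps)%R in HN1.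
  destruct (Rabs_def2 _ _ HN1) as [H1 H2].
  set (v := sum_n a (pred (N - 2))) in *.
  unfold eps in *. lra.
Qed.

Lemma cara e h beta k :
  hypS e h -> e 0%nat = 1 -> (forall z, inU z -> z <> 0 -> (beta < Re (h z))%R) ->
  (1 <= k <= 2)%nat -> (Cmod (e k) <= 2 * (1 - beta))%R.
Proof.
  intros HF He0 Hpos Hk.
  set (X := Cmod (e k)). set (Y := (2 * (1 - beta))%R).
  assert (HX : (0 <= X)%R) by apply Cmod_ge_0.
  apply Rnot_lt_le. intros Hlt.
  set (d := ((X - Y) / (4 * (X + 1)))%R).
  assert (Hd1 : (0 < d)%R) by (unfold d; apply Rdiv_lt_0_compat; lra).
  assert (Hd2 : (d * (4 * (X + 1)) = X - Y)%R) by (unfold d; field; lra).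
  set (eps := Rmin (1 / 4) d).
  assert (He1 : (0 < eps)%R) by (unfold eps; apply Rmin_pos; lra).
  assert (He3 : (eps <= 1 / 4)%R) by apply Rmin_l.
  assert (He4 : (eps <= d)%R) by apply Rmin_r.
  pose proof (cara_r e h beta k (1 - eps) HF He0 Hpos Hk ltac:(lra)) as Hc. fold X Y in Hc.
  assert (Hp : (1 - 2 * eps <= (1 - eps) ^ k)%R).
  { destruct (Nat.eq_dec k 1) as [->|]. simpl. lra.
    replace k with 2%nat by lia. simpl. nra. }
  assert (H1 : (X * (1 - 2 * eps) <= Y)%R).
  { eapply Rle_trans. 2: exact Hc. apply Rmult_le_compat_l; auto. }
  assert (H2 : (2 * eps * X <= 2 * d * X)%R) by nra.
  assert (H3 : (2 * d * X < X - Y)%R) by nra.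
  lra.
Qed.

Open Scope R_scope.
Open Scope C_scope.

Lemma is_series_C_ext (a b : nat -> C) (l1 l2 : C) :
  is_series a l1 -> (forall n, a n = b n) -> l1 = l2 -> is_series b l2.
Proof. intros H E1 <-. eapply is_series_ext. apply E1. exact H. Qed.

Lemma deriv_uniq (F : C -> C) z l1 l2 :
  @is_derive C_AbsRing C_NormedModule F z l1 -> @is_derive C_AbsRing C_NormedModule F z l2 -> l1 = l2.
Proof.
  intros H1 H2. rewrite <- (is_C_derive_unique F z l1 H1). apply is_C_derive_unique. exact H2.
Qed.

Lemma locally_U z : inU z -> @locally (AbsRing_UniformSpace C_AbsRing) z inU.
Proof.
  intros Hz. unfold inU in *.
  assert (H : (0 < 1 - Cmod z)%R) by lra.
  exists (mkposreal _ H). intros t Ht. simpl in Ht.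
  change (Cmod (t - z) < 1 - Cmod z)%R in Ht.
  replace t with (z + (t - z)) by ring. eapply Rle_lt_trans. apply Cmod_triangle. lra.
Qed.

Lemma series_at_0 (e : nat -> C) : is_series (fun k => e k * 0 ^ k) (e 0%nat).
Proof.
  eapply is_series_ext. 2: apply (delta_series 0 (e 0%nat)).
  intros [|k]; simpl. ring. ring.
Qed.

Definition w2 (d : nat -> C) (k : nat) : C :=
  match k with O => 0 | S k' => dcoef (dcoef d) k' end.

Definition al (lam gam : R) : C := (1 - RtoC lam) * (1 - RtoC gam).
Definition mu (lam gam : R) : C := RtoC lam * (RtoC gam + 1) + RtoC gam.
Definition nu (lam gam : R) : C := RtoC lam * RtoC gam.

Definition ee (tau : C) (lam gam : R) (delta : nat) (c : nat -> C) (k : nat) : C :=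
  / tau * (al lam gam * rusch_coef delta c (S k) + mu lam gam * dcoef (rusch_coef delta c) k
           + nu lam gam * w2 (rusch_coef delta c) k) +
  (if Nat.eqb k 0 then 1 - / tau * (nu lam gam * 2 + 1) else RtoC 0).

Lemma J_series tau lam gam delta beta c :
  J_condition tau lam gam delta beta c ->
  exists h, hypS (ee tau lam gam delta c) h /\ (forall z, inU z -> z <> 0 -> (beta < Re (h z))%R).
Proof.
  intros [F [D1 [D2 [HF [HD1 [HD2 Hpos]]]]]].
  set (d := rusch_coef delta c).
  assert (HFd : hypS d F) by exact HF.
  set (S1 := fun z => CSeries (fun n => dcoef d n * z ^ n)).
  assert (HS1 : hypS (dcoef d) S1) by exact (dseries_hyp d F HFd).
  set (S2 := fun z => CSeries (fun n => dcoef (dcoef d) n * z ^ n)).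
  assert (HS2 : hypS (dcoef (dcoef d)) S2) by exact (dseries_hyp (dcoef d) S1 HS1).
  assert (ED1 : forall z, inU z -> D1 z = S1 z).
  { intros z Hz. apply (deriv_uniq F z). apply HD1; auto. apply (ps_deriv d F HFd z Hz). }
  assert (ED2 : forall z, inU z -> D2 z = S2 z).
  { intros z Hz. apply (deriv_uniq S1 z).
    apply (is_derive_ext_loc D1). 
    - generalize (locally_U z Hz). apply filter_imp. intros t Ht. apply ED1; auto.
    - apply HD2; auto.
    - apply (ps_deriv (dcoef d) S1 HS1 z Hz). }
  set (J := J_expr tau lam gam F D1 D2).
  exists (fun z => if Ceq_dec z 0 then ee tau lam gam delta c 0 else J z). split.
  2: { intros z Hz Hz0. destruct (Ceq_dec z 0); [contradiction|]. apply Hpos; auto. }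
  intros z Hz. destruct (Ceq_dec z 0) as [->|Hz0]. apply series_at_0.
  assert (T1 : is_series (fun k => d (S k) * z ^ k) (F z / z)).
  { pose proof (is_series_scal (/ z) _ _ (is_series_shift1 _ _ (HFd z Hz))) as H.
    apply (is_series_C_ext _ _ _ _ H).
    - intros k. assert (E : / z * (d (S k) * z ^ S k) = d (S k) * z ^ k).
      { rewrite Cpow_S. field. auto. }
      exact E.
    - assert (E : / z * (F z - d 0%nat * z ^ 0) = F z / z).
      { replace (d 0%nat) with (RtoC 0) by reflexivity. simpl. field. auto. }
      exact E. }
  assert (T2 : is_series (fun k => dcoef d k * z ^ k) (D1 z)).
  { rewrite ED1 by auto. apply HS1; auto. }
  assert (T3 : is_series (fun k => w2 d k * z ^ k) (z * D2 z)).
  { apply is_series_decr_1.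
    pose proof (is_series_scal z _ _ (HS2 z Hz)) as H.
    apply (is_series_C_ext _ _ _ _ H).
    - intros k. assert (E : z * (dcoef (dcoef d) k * z ^ k) = w2 d (S k) * z ^ S k).
      { simpl w2. rewrite Cpow_S. ring. }
      exact E.
    - assert (E : z * S2 z = z * D2 z + - (w2 d 0 * z ^ 0)).
      { rewrite ED2 by auto. simpl. ring. }
      exact E. }
  pose proof (is_series_plus _ _ _ _
     (is_series_scal (/ tau) _ _ (is_series_plus _ _ _ _ (is_series_plus _ _ _ _
        (is_series_scal (al lam gam) _ _ T1) (is_series_scal (mu lam gam) _ _ T2))
        (is_series_scal (nu lam gam) _ _ T3)))
     (delta_series 0 (1 - / tau * (nu lam gam * 2 + 1)))) as H.
  apply (is_series_C_ext _ _ _ _ H).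
  - intros k. destruct k.
    + assert (E : / tau * (al lam gam * (d 1%nat * z ^ 0) + mu lam gam * (dcoef d 0 * z ^ 0) + nu lam gam * (w2 d 0 * z ^ 0))
                  + (1 - / tau * (nu lam gam * 2 + 1)) = ee tau lam gam delta c 0 * z ^ 0).
      { unfold ee. simpl. fold d. ring. }
      exact E.
    + assert (E : / tau * (al lam gam * (d (S (S k)) * z ^ S k) + mu lam gam * (dcoef d (S k) * z ^ S k) + nu lam gam * (w2 d (S k) * z ^ S k))
                  + RtoC 0 = ee tau lam gam delta c (S k) * z ^ S k).
      { unfold ee. simpl Nat.eqb. cbv iota. fold d. ring. }
      exact E.
  - assert (E : / tau * (al lam gam * (F z / z) + mu lam gam * D1 z + nu lam gam * (z * D2 z))
                  + (1 - / tau * (nu lam gam * 2 + 1)) = J z).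
    { unfold J, J_expr, al, mu, nu. ring. }
    exact E.
Qed.


Open Scope R_scope.
Open Scope C_scope.

Lemma rf1 delta : rusch_factor delta 1 = 1%R.
Proof.
  unfold rusch_factor. replace (delta + 1 - 1)%nat with delta by lia. simpl fact.
  pose proof (INR_fact_neq_0 delta). simpl INR. field. auto.
Qed.

Lemma rf2 delta : rusch_factor delta 2 = (INR delta + 1)%R.
Proof.
  unfold rusch_factor. replace (delta + 2 - 1)%nat with (S delta) by lia.
  change (fact (S delta)) with (S delta * fact delta)%nat. rewrite mult_INR, S_INR.
  pose proof (INR_fact_neq_0 delta). simpl fact. simpl INR. field. auto.
Qed.

Lemma rf3 delta : rusch_factor delta 3 = ((INR delta + 1) * (INR delta + 2) / 2)%R.
Proof.
  unfold rusch_factor. replace (delta + 3 - 1)%nat with (S (S delta)) by lia.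
  change (fact (S (S delta))) with (S (S delta) * (S delta * fact delta))%nat. rewrite !mult_INR, !S_INR.
  pose proof (INR_fact_neq_0 delta). simpl fact. simpl INR. field. auto.
Qed.

Lemma ee0 (tau : C) (lam gam : R) (delta : nat) (c : nat -> C) : c 1%nat = RtoC 1 -> ee tau lam gam delta c 0 = RtoC 1.
Proof.
  intros Hc1. unfold ee, dcoef, w2, rusch_coef. rewrite rf1, Hc1. simpl Nat.eqb. cbv iota.
  unfold al, mu, nu. simpl INR. ring.
Qed.

Lemma C_eq_comp (x y : C) : fst x = fst y -> snd x = snd y -> x = y.
Proof. destruct x, y; simpl; intros -> ->; reflexivity. Qed.

Lemma ee1 tau lam gam delta c :
  ee tau lam gam delta c 1 = / tau * (RtoC ((1 + lam + gam + 5 * lam * gam) * (INR delta + 1)) * c 2%nat).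
Proof.
  unfold ee, w2, dcoef, rusch_coef, al, mu, nu. simpl. rewrite !rf2.
  set (it := / tau). set (x := c 2%nat). destruct it as [p q], x as [u v].
  apply C_eq_comp; simpl; ring.
Qed.

Lemma ee2 tau lam gam delta c :
  ee tau lam gam delta c 2 = / tau * (RtoC ((1 + 2 * (lam + gam + 5 * lam * gam)) * ((INR delta + 1) * (INR delta + 2) / 2)) * c 3%nat).
Proof.
  unfold ee, w2, dcoef, rusch_coef, al, mu, nu. simpl. rewrite !rf3.
  set (it := / tau). set (x := c 3%nat). destruct it as [p q], x as [u v].
  apply C_eq_comp; simpl; field.
Qed.

Open Scope R_scope.
Open Scope C_scope.

Notation isD := (@is_derive C_AbsRing C_NormedModule).
Notation isDK := (@is_derive C_AbsRing (AbsRing_NormedModule C_AbsRing)).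

Lemma conv1 (g : C -> C) w l : isD g w l -> isDK g w l.
Proof. intros [_ H]. split. apply is_linear_scal_l. intros x0 Hx eps. apply (H x0 Hx eps). Qed.
Lemma conv2 (g : C -> C) w l : isDK g w l -> isD g w l.
Proof. intros [_ H]. split. apply is_linear_scal_l. intros x0 Hx eps. apply (H x0 Hx eps). Qed.

Lemma locally_ballC z rho : (Cmod z < rho)%R -> @locally (AbsRing_UniformSpace C_AbsRing) z (fun t => Cmod t < rho)%R.
Proof.
  intros Hz.
  assert (H : (0 < rho - Cmod z)%R) by lra.
  exists (mkposreal _ H). intros t Ht. simpl in Ht.
  change (Cmod (t - z) < rho - Cmod z)%R in Ht.
  replace t with (z + (t - z)) by ring. eapply Rle_lt_trans. apply Cmod_triangle. lra.
Qed.

Lemma deriv_const_on (phi : C -> C) (k : C) rho w l :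
  (forall t, Cmod t < rho -> phi t = k)%R -> (Cmod w < rho)%R -> isDK phi w l -> l = RtoC 0.
Proof.
  intros Hc Hw Hd.
  assert (H0 : isDK phi w zero).
  { apply (@is_derive_ext_loc C_AbsRing (AbsRing_NormedModule C_AbsRing) (fun _ => k)).
    generalize (locally_ballC w rho Hw). apply filter_imp. intros t Ht. symmetry. auto.
    apply is_derive_const. }
  exact (deriv_uniq phi w l _ (conv2 _ _ _ Hd) (conv2 _ _ _ H0)).
Qed.

Lemma deriv_id_on (phi : C -> C) rho w l :
  (forall t, Cmod t < rho -> phi t = t)%R -> (Cmod w < rho)%R -> isDK phi w l -> l = RtoC 1.
Proof.
  intros Hc Hw Hd.
  assert (H0 : isDK phi w one).
  { apply (@is_derive_ext_loc C_AbsRing (AbsRing_NormedModule C_AbsRing) (fun t => t)).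
    generalize (locally_ballC w rho Hw). apply filter_imp. intros t Ht. symmetry. auto.
    apply is_derive_id. }
  exact (deriv_uniq phi w l _ (conv2 _ _ _ Hd) (conv2 _ _ _ H0)).
Qed.

Definition D1f (c : nat -> C) z := CSeries (fun n => dcoef c n * z ^ n).

Lemma at0 (c : nat -> C) (F : C -> C) : hypS c F -> F 0 = c 0%nat.
Proof.
  intros H. apply (is_series_uniq (fun k => c k * 0 ^ k)). apply H. unfold inU. rewrite Cmod_0. lra.
  apply series_at_0.
Qed.

Lemma inverse_coefs a f b g : bi_univalent_pair a f b g ->
  b 2%nat = - a 2%nat /\ b 3%nat = 2 * a 2%nat * a 2%nat - a 3%nat.
Proof.
  intros [[Ha0 [Ha1 Hf]] [_ [[Hb0 [Hb1 Hg]] [_ [r0 [Hr0 Hinv]]]]]].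
  assert (Hf0 : hypS a f) by exact Hf. assert (Hg0 : hypS b g) by exact Hg.
  set (f1 := D1f a). set (f2 := D1f (dcoef a)). set (f3 := D1f (dcoef (dcoef a))).
  set (g1 := D1f b). set (g2 := D1f (dcoef b)). set (g3 := D1f (dcoef (dcoef b))).
  assert (Hf1 : hypS (dcoef a) f1) by exact (dseries_hyp a f Hf0).
  assert (Hf2 : hypS (dcoef (dcoef a)) f2) by exact (dseries_hyp _ f1 Hf1).
  assert (Hf3 : hypS (dcoef (dcoef (dcoef a))) f3) by exact (dseries_hyp _ f2 Hf2).
  assert (Hg1 : hypS (dcoef b) g1) by exact (dseries_hyp b g Hg0).
  assert (Hg2 : hypS (dcoef (dcoef b)) g2) by exact (dseries_hyp _ g1 Hg1).
  assert (Hg3 : hypS (dcoef (dcoef (dcoef b))) g3) by exact (dseries_hyp _ g2 Hg2).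
  assert (Df : forall z, inU z -> isDK f z (f1 z)) by (intros; apply conv1, (ps_deriv a f Hf0); auto).
  assert (Df1 : forall z, inU z -> isDK f1 z (f2 z)) by (intros; apply conv1, (ps_deriv _ f1 Hf1); auto).
  assert (Df2 : forall z, inU z -> isDK f2 z (f3 z)) by (intros; apply conv1, (ps_deriv _ f2 Hf2); auto).
  assert (Dg : forall z, inU z -> isDK g z (g1 z)) by (intros; apply conv1, (ps_deriv b g Hg0); auto).
  assert (Dg1 : forall z, inU z -> isDK g1 z (g2 z)) by (intros; apply conv1, (ps_deriv _ g1 Hg1); auto).
  assert (Dg2 : forall z, inU z -> isDK g2 z (g3 z)) by (intros; apply conv1, (ps_deriv _ g2 Hg2); auto).
  set (rho := Rmin r0 1).
  assert (Hrho : (0 < rho)%R) by (apply Rmin_pos; lra).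
  assert (HV : forall w, (Cmod w < rho)%R -> inU w /\ inU (g w) /\ f (g w) = w).
  { intros w Hw. assert (Hl : (rho <= r0)%R) by apply Rmin_l. assert (Hr : (rho <= 1)%R) by apply Rmin_r.
    destruct (Hinv w ltac:(lra)) as [H1 H2]. split; auto. unfold inU. lra. }
  assert (S1 : forall w, (Cmod w < rho)%R -> g1 w * f1 (g w) = 1).
  { intros w Hw. destruct (HV w Hw) as [Hw1 [Hw2 Hw3]].
    apply (deriv_id_on (fun t => f (g t)) rho w); auto.
    intros t Ht. apply HV; auto.
    exact (@is_derive_comp C_AbsRing (AbsRing_NormedModule C_AbsRing) f g w _ _ (Df _ Hw2) (Dg _ Hw1)). }
  assert (D2 : forall w, (Cmod w < rho)%R ->
     isDK (fun t => g1 t * f1 (g t)) w (g2 w * f1 (g w) + g1 w * (g1 w * f2 (g w)))).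
  { intros w Hw. destruct (HV w Hw) as [Hw1 [Hw2 Hw3]].
    exact (is_derive_mult g1 (fun t => f1 (g t)) w _ _ (Dg1 _ Hw1)
             (@is_derive_comp C_AbsRing (AbsRing_NormedModule C_AbsRing) f1 g w _ _ (Df1 _ Hw2) (Dg _ Hw1)) Cmult_comm). }
  assert (S2 : forall w, (Cmod w < rho)%R -> g2 w * f1 (g w) + g1 w * (g1 w * f2 (g w)) = 0).
  { intros w Hw. apply (deriv_const_on (fun t => g1 t * f1 (g t)) 1 rho w); auto. }
  assert (H0 : (Cmod (RtoC 0) < rho)%R) by (rewrite Cmod_0; lra).
  assert (D3 : isDK (fun t => g2 t * f1 (g t) + g1 t * (g1 t * f2 (g t))) (RtoC 0)
      ((g3 0 * f1 (g 0) + g2 0 * (g1 0 * f2 (g 0))) +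
       (g2 0 * (g1 0 * f2 (g 0)) + g1 0 * (g2 0 * f2 (g 0) + g1 0 * (g1 0 * f3 (g 0)))))).
  { destruct (HV (RtoC 0) H0) as [Hw1 [Hw2 Hw3]].
    exact (@is_derive_plus C_AbsRing (AbsRing_NormedModule C_AbsRing) (fun t => g2 t * f1 (g t)) (fun t => g1 t * (g1 t * f2 (g t))) (RtoC 0) _ _
      (is_derive_mult g2 (fun t => f1 (g t)) (RtoC 0) _ _ (Dg2 _ Hw1)
         (@is_derive_comp C_AbsRing (AbsRing_NormedModule C_AbsRing) f1 g (RtoC 0) _ _ (Df1 _ Hw2) (Dg _ Hw1)) Cmult_comm)
      (is_derive_mult g1 (fun t => g1 t * f2 (g t)) (RtoC 0) _ _ (Dg1 _ Hw1)
         (is_derive_mult g1 (fun t => f2 (g t)) (RtoC 0) _ _ (Dg1 _ Hw1)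
            (@is_derive_comp C_AbsRing (AbsRing_NormedModule C_AbsRing) f2 g (RtoC 0) _ _ (Df2 _ Hw2) (Dg _ Hw1)) Cmult_comm) Cmult_comm)). }
  assert (S3 := deriv_const_on _ (RtoC 0) rho (RtoC 0) _ S2 H0 D3).
  assert (Eg0 : g 0 = 0) by (rewrite (at0 b g Hg0); auto).
  rewrite Eg0 in S3.
  specialize (S2 0 H0). rewrite Eg0 in S2.
  rewrite ?(at0 _ f1 Hf1), ?(at0 _ f2 Hf2), ?(at0 _ f3 Hf3), ?(at0 _ g1 Hg1), ?(at0 _ g2 Hg2), ?(at0 _ g3 Hg3) in S2.
  rewrite ?(at0 _ f1 Hf1), ?(at0 _ f2 Hf2), ?(at0 _ f3 Hf3), ?(at0 _ g1 Hg1), ?(at0 _ g2 Hg2), ?(at0 _ g3 Hg3) in S3.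
  unfold dcoef in S2, S3. rewrite Ha1, Hb1 in S2, S3.
  assert (I1 : RtoC (INR 1) = 1) by reflexivity.
  assert (I2 : RtoC (INR 2) = 2) by (f_equal; simpl; ring).
  assert (I3 : RtoC (INR 3) = 3) by (f_equal; simpl; ring).
  rewrite ?I1, ?I2, ?I3 in S2, S3.
  assert (H2 : RtoC 2 <> 0) by (intros E; apply RtoC_inj in E; lra).
  assert (H3 : RtoC 3 <> 0) by (intros E; apply RtoC_inj in E; lra).
  assert (Hb2 : b 2%nat = - a 2%nat).
  { match type of S2 with ?L = _ => assert (E2 : b 2%nat + a 2%nat = / 2 * L) by (field; auto) end.
    rewrite S2, Cmult_0_r in E2.
    transitivity (b 2%nat + a 2%nat - a 2%nat). ring. rewrite E2. ring. }
  split; auto.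
  match type of S3 with ?L = ?R => change (@eq C L R) in S3 end.
  rewrite ?I1, ?I2, ?I3 in S3.
  rewrite Hb2 in S3.
  match type of S3 with ?L = _ => assert (E3 : b 3%nat - (2 * a 2%nat * a 2%nat - a 3%nat) = / (2 * 3) * L) end.
  { field. }
  rewrite S3, Cmult_0_r in E3.
  transitivity (b 3%nat - (2 * a 2%nat * a 2%nat - a 3%nat) + (2 * a 2%nat * a 2%nat - a 3%nat)). ring.
  rewrite E3. ring.
Qed.

Open Scope R_scope.
Open Scope C_scope.

Lemma coef_bound (tau : C) (lam gam : R) (delta : nat) (beta : R) (c : nat -> C) :
  tau <> RtoC 0 -> c 1%nat = 1 -> J_condition tau lam gam delta beta c ->
  (Rabs ((1 + lam + gam + 5 * lam * gam) * (INR delta + 1)) * Cmod (c 2%nat) <= 2 * (1 - beta) * Cmod tau)%R /\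
  (Rabs ((1 + 2 * (lam + gam + 5 * lam * gam)) * ((INR delta + 1) * (INR delta + 2) / 2)) * Cmod (c 3%nat)
     <= 2 * (1 - beta) * Cmod tau)%R.
Proof.
  intros Htau Hc1 HJ.
  destruct (J_series tau lam gam delta beta c HJ) as [h [Hh Hpos]].
  pose proof (ee0 tau lam gam delta c Hc1) as He0.
  pose proof (cara _ h beta 1 Hh He0 Hpos ltac:(lia)) as H1.
  pose proof (cara _ h beta 2 Hh He0 Hpos ltac:(lia)) as H2.
  rewrite ee1 in H1. rewrite ee2 in H2.
  rewrite !Cmod_mult, Cmod_inv, Cmod_R in H1, H2 by auto.
  assert (Ht : (0 < Cmod tau)%R) by (apply Cmod_gt_0; auto).
  split.
  - apply (Rmult_le_compat_l (Cmod tau)) in H1; [|lra].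
    rewrite <- Rmult_assoc, Rinv_r, Rmult_1_l in H1 by lra. lra.
  - apply (Rmult_le_compat_l (Cmod tau)) in H2; [|lra].
    rewrite <- Rmult_assoc, Rinv_r, Rmult_1_l in H2 by lra. lra.
Qed.

Close Scope C_scope.
Close Scope R_scope.

Theorem corollary6 (lam gam beta : R) (tau : C) (delta : nat)
    (a : nat -> C) (f : C -> C) :
  (0 <= lam)%R -> (0 <= gam <= 1)%R -> (0 <= beta < 1)%R -> tau <> RtoC 0 ->
  Theta_Sigma tau lam gam delta beta a f ->
  (Cmod (a 2%nat) <=
     Rmin (2 * Cmod tau * (1 - beta)
             / ((INR delta + 1) * (1 + lam + gam + 5 * lam * gam)))
          (2 * sqrt (Cmod tau * (1 - beta)
             / ((INR delta + 1) * (INR delta + 2)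
                * (1 + 2 * (lam + gam + 5 * lam * gam))))))%R /\
  (Cmod (a 3%nat) <=
     4 * Cmod tau * (1 - beta)
       / ((INR delta + 1) * (INR delta + 2)
          * (1 + 2 * (lam + gam + 5 * lam * gam))))%R.
Proof.
  intros Hlam Hgam Hbeta Htau [b [g [Hbu [HJa HJb]]]].
  pose proof Hbu as [[Ha0 [Ha1 _]] [_ [[Hb0 [Hb1 _]] _]]].
  destruct (inverse_coefs a f b g Hbu) as [Hb2 Hb3].
  destruct (coef_bound tau lam gam delta beta a Htau Ha1 HJa) as [A2 A3].
  destruct (coef_bound tau lam gam delta beta b Htau Hb1 HJb) as [_ B3].
  rewrite Hb3 in B3.
  set (B := (1 + lam + gam + 5 * lam * gam)%R) in *.
  set (B' := (1 + 2 * (lam + gam + 5 * lam * gam))%R) in *.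
  set (dd := INR delta) in *.
  assert (Hd : (0 <= dd)%R) by apply pos_INR.
  assert (HB : (1 <= B)%R) by (unfold B; nra).
  assert (HB' : (1 <= B')%R) by (unfold B'; nra).
  set (T := Cmod tau) in *.
  assert (HT : (0 < T)%R) by (apply Cmod_gt_0; auto).
  rewrite Rabs_pos_eq in A2, A3, B3 by (apply Rmult_le_pos; try apply Rmult_le_pos; try apply Rdiv_le_0_compat; nra).
  set (x2 := Cmod (a 2%nat)) in *. set (x3 := Cmod (a 3%nat)) in *.
  assert (Hx2 : (0 <= x2)%R) by apply Cmod_ge_0.
  assert (Hx3 : (0 <= x3)%R) by apply Cmod_ge_0.
  set (K3 := (B' * ((dd + 1) * (dd + 2) / 2))%R) in *.
  assert (HK3 : (0 < K3)%R) by (unfold K3; apply Rmult_lt_0_compat; [lra| apply Rdiv_lt_0_compat; nra]).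
  (* |b3| bound gives |a2|^2 *)
  assert (Hsq : (2 * x2 * x2 * K3 <= 4 * (1 - beta) * T)%R).
  { assert (Htri : (Cmod (RtoC 2 * a 2%nat * a 2%nat)%C <= Cmod (RtoC 2 * a 2%nat * a 2%nat - a 3%nat)%C + x3)%R).
    { replace (RtoC 2 * a 2%nat * a 2%nat)%C with ((RtoC 2 * a 2%nat * a 2%nat - a 3%nat) + a 3%nat)%C at 1 by ring.
      apply Cmod_triangle. }
    rewrite !Cmod_mult, Cmod_R, Rabs_pos_eq in Htri by lra. fold x2 in Htri.
    nra. }
  split.
  - apply Rmin_glb.
    + apply (Rmult_le_reg_l ((dd + 1) * B)). nra.
      replace ((dd + 1) * B * (2 * T * (1 - beta) / ((dd + 1) * B)))%R with (2 * (1 - beta) * T)%R by (field; nra).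
      nra.
    + set (Q := (T * (1 - beta) / ((dd + 1) * (dd + 2) * B'))%R).
      assert (HQ : (0 <= Q)%R) by (unfold Q; apply Rdiv_le_0_compat; nra).
      assert (HQ2 : (x2 * x2 <= 4 * Q)%R).
      { unfold Q. apply (Rmult_le_reg_l K3). auto.
        replace (K3 * (4 * (T * (1 - beta) / ((dd + 1) * (dd + 2) * B'))))%R with (2 * (1 - beta) * T)%R
          by (unfold K3; field; nra).
        nra. }
      pose proof (sqrt_sqrt Q HQ) as Hs. pose proof (sqrt_pos Q) as Hs0.
      nra.
  - apply (Rmult_le_reg_l K3). auto.
    replace (K3 * (4 * T * (1 - beta) / ((dd + 1) * (dd + 2) * B')))%R with (2 * (1 - beta) * T)%R
      by (unfold K3; field; nra).
    nra.
Qed.
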